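(* Let $(\mathcal R,\le,r)$ be a closed triple satisfying A.1–A.4 with $(\mathcal R,\le)$ a partial order with top element $\mathbb A$. Let $\mathcal C\subseteq\mathcal R$ be a filter on $(\mathcal R,\le)$ with basic Tukey reductions and $\mathcal V$ a nonprincipal ultrafilter on $\omega$ with $\mathcal V\le_T\mathcal C$. Then there are a front $\mathcal F$ on $\mathcal C$ and a function $f:\mathcal F\to\omega$ such that for every $Y\in\mathcal V$ there is $X\in\mathcal C$ with $f[\mathcal F|X]\subseteq Y$. Moreover, if $\mathcal C\restriction\mathcal F$ is a base for an ultrafilter on $\mathcal F$, then $\mathcal V=f(\langle\mathcal C\restriction\mathcal F\rangle)$.
   Context: Axioms A.1–A.4, $\le_{\rm fin}$, $\sqsubseteq$, depth, filters and ''basic Tukey reductions'' are as defined in the context of the p-point Tukey theorem: $r_n(A)$ are approximations, $\mathcal{AR}=\bigcup_n\{r_n(A)\}$; A.1: $r_0(A)=\emptyset$, distinct $A,B$ differ at some $r_n$, $r_n(A)=r_m(B)\Rightarrow n=m$ and equal earlier approximations; A.2: quasi-order $\le_{\rm fin}$ on $\mathcal{AR}$ with finite down-sets, $A\le B\iff\forall n\exists m\ r_n(A)\le_{\rm fin}r_m(B)$, and $a\sqsubset b\le_{\rm fin}c\Rightarrow\exists d\sqsubset c\ a\le_{\rm fin}d$; A.3 and A.4 as usual (nonemptiness/refinement of $[a,A]$ and one-step pigeonhole on $r_{|a|+1}[a,A]$). $\mathcal C$ has basic Tukey reductions if every monotone cofinal $f:\mathcal C\to\mathcal V$ ($\mathcal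 V$ nonprincipal ultrafilter on $\omega$) agrees on $\{Y\in\mathcal C:Y\le X\}$, for some $X\in\mathcal C$, with a monotone continuous $\tilde f:\mathcal R\to\mathcal P(\omega)$ given by $\tilde f(Y)=\bigcup_k\hat f(r_k(Y))$ for some $\hat f:\mathcal{AR}\to[\omega]^{<\omega}$ that is end-extension preserving along $\sqsubseteq$, monotone for $\le_{\rm fin}$, and satisfies $\hat f(s)\subseteq k$ whenever $\mathrm{depth}_{\mathbb A}(s)\le k$. Tukey: $\mathcal V\le_T\mathcal C$ means there is $g:\mathcal C\to\mathcal V$ mapping every cofinal subset of $(\mathcal C,\ge)$ onto a cofinal subset of $(\mathcal V,\supseteq)$. A front on $\mathcal C$ is $\mathcal F\subseteq\mathcal{AR}$ such that every $C\in\mathcal C$ has some $s\in\mathcal F$ with $s\sqsubseteq C$ (i.e. $s=r_n(C)$ for some $n$) and no member of $\mathcal F$ is a proper initial segment of another. $\mathcal F|X=\{a\in\mathcal F:a\le_{\rm fin}X\}$, $\mathcal C\restriction\mathcal F=\{\mathcal F|X:X\in\mathcal C\}$, $\langle\mathcal C\restriction\mathcal F\rangle$ the filter it generates, and $f(\mathcal U)=\{Z\subseteq\omega:f^{-1}[Z]\in\mathcal U\}$. *)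

(* Defs.v *)
From Stdlib Require Import List Arith.
Set Implicit Arguments.

Section RamseySpace.
Variables (R AR : Type) (le : R -> R -> Prop) (r : nat -> R -> AR)
          (lefin : AR -> AR -> Prop) (top : R).

Definition sqsubeq (a b : AR) : Prop :=
  exists A n m, n <= m /\ a = r n A /\ b = r m A.
Definition sqsub (a b : AR) : Prop :=
  exists A n m, n < m /\ a = r n A /\ b = r m A.

Definition lefinR (a : AR) (X : R) : Prop := exists n, lefin a (r n X).

Definition depth (B : R) (a : AR) (n : nat) : Prop :=
  lefin a (r n B) /\ forall m, m < n -> ~ lefin a (r m B).

Definition in_interval (a : AR) (B X : R) : Prop :=
  le X B /\ exists n, r n X = a.

Definition next_approx (a : AR) (A : R) (b : AR) : Prop :=
  exists X n, le X A /\ r n X = a /\ b = r (S n) X.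

Definition closed_triple : Prop :=
  forall s : nat -> AR,
    (forall n, exists A, forall k, k <= n -> r k A = s k) ->
    exists A, forall k, r k A = s k.

Definition axiom_A1 : Prop :=
  (forall A B, r 0 A = r 0 B) /\
  (forall A B, A <> B -> exists n, r n A <> r n B) /\
  (forall A B n m, r n A = r m B -> n = m /\ forall i, i < n -> r i A = r i B).

Definition axiom_A2 : Prop :=
  (forall a, lefin a a) /\
  (forall a b c, lefin a b -> lefin b c -> lefin a c) /\
  (forall a, exists l : list AR, forall b, lefin b a -> In b l) /\
  (forall A B, le A B <-> forall n, exists m, lefin (r n A) (r m B)) /\
  (forall a b c, sqsub a b -> lefin b c -> exists d, sqsub d c /\ lefin a d).

Definition axiom_A3 : Prop :=
  (forall a B n, depth B a n ->
     forall A, in_interval (r n B) B A -> exists X, in_interval a A X) /\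
  (forall a A B, le A B -> (exists X, in_interval a A X) ->
     exists n A', depth B a n /\ in_interval (r n B) B A' /\
       (exists X, in_interval a A' X) /\
       (forall X, in_interval a A' X -> in_interval a A X)).

Definition axiom_A4 : Prop :=
  forall a B n, depth B a n -> forall O : AR -> Prop,
    exists A, in_interval (r n B) B A /\
      ((forall b, next_approx a A b -> O b) \/
       (forall b, next_approx a A b -> ~ O b)).

Definition partial_order_top : Prop :=
  (forall A, le A A) /\
  (forall A B C, le A B -> le B C -> le A C) /\
  (forall A B, le A B -> le B A -> A = B) /\
  (forall A, le A top).

Definition ramsey_setting : Prop :=
  closed_triple /\ axiom_A1 /\ axiom_A2 /\ axiom_A3 /\ axiom_A4 /\
  partial_order_top.

Definition is_filter (Cf : R -> Prop) : Prop :=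
  (exists X, Cf X) /\
  (forall X Y, Cf X -> le X Y -> Cf Y) /\
  (forall X Y, Cf X -> Cf Y -> exists Z, Cf Z /\ le Z X /\ le Z Y).

End RamseySpace.

(* Ultrafilters on a "universe" U ⊆ T, with subsets represented as predicates *)
Definition is_ultrafilter_on {T : Type} (U : T -> Prop)
    (F : (T -> Prop) -> Prop) : Prop :=
  (forall Z, F Z -> forall x, Z x -> U x) /\
  F U /\
  ~ F (fun _ => False) /\
  (forall Z W, F Z -> (forall x, Z x -> W x) -> (forall x, W x -> U x) -> F W) /\
  (forall Z W, F Z -> F W -> F (fun x => Z x /\ W x)) /\
  (forall Z, (forall x, Z x -> U x) ->
     F Z \/ F (fun x => U x /\ ~ Z x)).

Definition nonprincipal_ultrafilter (V : (nat -> Prop) -> Prop) : Prop :=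
  is_ultrafilter_on (fun _ => True) V /\ forall n, ~ V (fun m => m = n).

Definition tukey_le {R : Type} (le : R -> R -> Prop) (Cf : R -> Prop)
    (V : (nat -> Prop) -> Prop) : Prop :=
  exists g : R -> (nat -> Prop),
    (forall X, Cf X -> V (g X)) /\
    forall Xs : R -> Prop,
      (forall X, Xs X -> Cf X) ->
      (forall Y, Cf Y -> exists X, Xs X /\ le X Y) ->
      forall W, V W -> exists X, Xs X /\ forall n, g X n -> W n.

Definition end_ext (u v : list nat) : Prop :=
  (forall x, In x u -> In x v) /\
  (forall x y, In x v -> ~ In x u -> In y u -> y < x).

Definition basic_tukey_reductions {R AR : Type} (le : R -> R -> Prop)
    (r : nat -> R -> AR) (lefin : AR -> AR -> Prop) (top : R)
    (Cf : R -> Prop) : Prop :=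
  forall (V : (nat -> Prop) -> Prop), nonprincipal_ultrafilter V ->
  forall f : R -> (nat -> Prop),
    (forall X, Cf X -> V (f X)) ->
    (forall X Y, Cf X -> Cf Y -> le X Y -> forall n, f X n -> f Y n) ->
    (forall W, V W -> exists X, Cf X /\ forall n, f X n -> W n) ->
    exists (X : R) (fhat : AR -> list nat),
      Cf X /\
      (forall s t, sqsubeq r s t -> end_ext (fhat s) (fhat t)) /\
      (forall s t, lefin s t -> forall n, In n (fhat s) -> In n (fhat t)) /\
      (forall s k, (exists n, n <= k /\ lefin s (r n top)) ->
         forall x, In x (fhat s) -> x < k) /\
      (forall Y Z, le Y Z -> forall n,
         (exists k, In n (fhat (r k Y))) -> exists k, In n (fhat (r k Z))) /\
      (forall Y, Cf Y -> le Y X ->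
         forall n, f Y n <-> exists k, In n (fhat (r k Y))).

Definition is_front {R AR : Type} (r : nat -> R -> AR) (Cf : R -> Prop)
    (F : AR -> Prop) : Prop :=
  (forall X, Cf X -> exists n, F (r n X)) /\
  (forall s t, F s -> F t -> ~ sqsub r s t).

Definition front_restr {R AR : Type} (r : nat -> R -> AR)
    (lefin : AR -> AR -> Prop) (F : AR -> Prop) (X : R) : AR -> Prop :=
  fun a => F a /\ lefinR r lefin a X.

Definition gen_filter {R AR : Type} (r : nat -> R -> AR)
    (lefin : AR -> AR -> Prop) (Cf : R -> Prop) (F : AR -> Prop)
    (Z : AR -> Prop) : Prop :=
  (forall a, Z a -> F a) /\
  exists Xs : list R, (forall X, In X Xs -> Cf X) /\
    forall a, F a -> (forall X, In X Xs -> front_restr r lefin F X a) -> Z a.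

(* Main.v *)
Require Import Defs.
From Stdlib Require Import List Arith Lia Classical.

Lemma min_ex (P : nat -> Prop) : (exists k, P k) -> exists k, P k /\ forall j, j < k -> ~ P j.
Proof.
  intros [k Hk].
  assert (H : forall n, forall k, k <= n -> P k -> exists k, P k /\ forall j, j < k -> ~ P j).
  { induction n as [|n IH]; intros k0 Hle Hk0.
    - exists k0; split; auto; intros j Hj; lia.
    - destruct (classic (exists j, j < k0 /\ P j)) as [[j [Hj HPj]]|Hn].
      + apply (IH j); auto; lia.
      + exists k0; split; auto; intros j Hj HPj; apply Hn; eauto. }
  eapply H; eauto.
Qed.

Lemma hd_in (l : list nat) : (exists x, In x l) -> In (hd 0 l) l.
Proof. destruct l as [|a l]; simpl; [intros [x []] | auto]. Qed.

Theorem mainTheorem8 (R AR : Type) (le : R -> R -> Prop) (r : nat -> R -> AR)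
    (lefin : AR -> AR -> Prop) (top : R)
    (Hsetting : ramsey_setting le r lefin top)
    (Cf : R -> Prop) (HC : is_filter le Cf)
    (HBT : basic_tukey_reductions le r lefin top Cf)
    (V : (nat -> Prop) -> Prop) (HV : nonprincipal_ultrafilter V)
    (HT : tukey_le le Cf V) :
  exists (F : AR -> Prop) (f : AR -> nat),
    is_front r Cf F /\
    (forall Y, V Y -> exists X, Cf X /\
       forall a, front_restr r lefin F X a -> Y (f a)) /\
    (is_ultrafilter_on F (gen_filter r lefin Cf F) ->
       forall Z : nat -> Prop,
         V Z <-> gen_filter r lefin Cf F (fun a => F a /\ Z (f a))).
Proof.
  destruct Hsetting as [_ [[_ [_ A13]] [_ [_ [_ [Hrefl [Htrans _]]]]]]].
  destruct HC as [_ [_ Hmeet]].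
  pose proof HV as HV0.
  destruct HV as [[_ [_ [Vne [Vup [_ Vult]]]]] _].
  destruct HT as [g [Hg Hcof]].
  set (fm := fun X n => exists Y, Cf Y /\ le Y X /\ g Y n).
  assert (fmV : forall X, Cf X -> V (fm X)).
  { intros X HX. apply (Vup (g X)); auto. intros x Hx; exists X; auto. }
  assert (fmmon : forall X Y, Cf X -> Cf Y -> le X Y -> forall n, fm X n -> fm Y n).
  { intros X Y _ _ HXY n [Z [HZ [HZX Hn]]]. exists Z; split; [|split]; eauto. }
  assert (fmcof : forall W, V W -> exists X, Cf X /\ forall n, fm X n -> W n).
  { intros W HW. apply NNPP; intro Hn.
    assert (H1 : forall X, (fun Y => Cf Y /\ ~ (forall n, g Y n -> W n)) X -> Cf X).
    { intros X [HX _]; auto. }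
    assert (H2 : forall Y, Cf Y -> exists X, (fun Y => Cf Y /\ ~ (forall n, g Y n -> W n)) X /\ le X Y).
    { intros Y HY. apply NNPP; intro Hn2. apply Hn. exists Y; split; auto.
      intros n [Z [HZ [HZY HgZ]]].
      apply NNPP; intro HWn. apply Hn2. exists Z; split; [split; [auto|intro Hall; apply HWn; auto]|auto]. }
    destruct (Hcof _ H1 H2 W HW) as [X [[HX HXn] HXW]]. contradiction. }
  destruct (HBT V HV0 fm fmV fmmon fmcof)
    as [X0 [fhat [HX0 [_ [Hlf [_ [Hmon Hrep]]]]]]].
  assert (Hne : forall X, Cf X -> exists k x, In x (fhat (r k X))).
  { intros X HX. destruct (Hmeet X X0 HX HX0) as [Z [HZ [HZX HZX0]]].
    assert (exists n, fm Z n) as [n Hn].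
    { apply NNPP; intro Hn. apply Vne. apply (Vup (fm Z)); auto.
      intros x Hx; apply Hn; eauto. }
    apply (Hrep Z HZ HZX0) in Hn.
    destruct (Hmon Z X HZX n Hn) as [k Hk]. eauto. }
  exists (fun s => (exists x, In x (fhat s)) /\ forall t, sqsub r t s -> forall x, ~ In x (fhat t)).
  exists (fun a => hd 0 (fhat a)).
  assert (P1 : forall Y, V Y -> exists X, Cf X /\ forall a, front_restr r lefin (fun s => (exists x, In x (fhat s)) /\ forall t, sqsub r t s -> forall x, ~ In x (fhat t)) X a ->
       Y (hd 0 (fhat a))).
  { intros Y HY. destruct (fmcof Y HY) as [X1 [HX1 HX1Y]].
    destruct (Hmeet X1 X0 HX1 HX0) as [Z [HZ [HZX1 HZX0]]].
    exists Z; split; auto.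
    intros a [[Hna _] [n Hn]].
    apply HX1Y. apply (fmmon Z X1); auto. apply (Hrep Z HZ HZX0).
    exists n. apply (Hlf a); auto. apply hd_in; auto. }
  split; [|split; [exact P1|]].
  - split.
    + intros X HX. destruct (min_ex _ (Hne X HX)) as [k [Hk Hmin]].
      exists k. split; auto.
      intros t [A [n [m [Hnm [Ht Hs]]]]] x Hx.
      destruct (A13 A X m k (eq_sym Hs)) as [Hmk Hi]. subst m t.
      apply (Hmin n); eauto. rewrite <- Hi; eauto.
    + intros s t [[x Hx] _] [_ Ht] Hst. exact (Ht s Hst x Hx).
  - intros [_ [_ [Gne [Gup [Gand _]]]]] Z. split.
    + intros HZ. destruct (P1 Z HZ) as [X [HX HXZ]].
      split; [tauto|]. exists (X :: nil). split.
      * intros X' [<-|[]]; auto.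
      * intros a Ha HaX. split; auto. apply HXZ. apply HaX. left; auto.
    + intros HG. destruct (Vult Z (fun _ _ => I)) as [HZ|HnZ]; auto.
      exfalso. apply Gne.
      assert (HG2 : gen_filter r lefin Cf
         (fun s => (exists x, In x (fhat s)) /\ forall t, sqsub r t s -> forall x, ~ In x (fhat t))
         (fun a => ((exists x, In x (fhat a)) /\ forall t, sqsub r t a -> forall x, ~ In x (fhat t)) /\ (True /\ ~ Z (hd 0 (fhat a))))).
      { destruct (P1 _ HnZ) as [X [HX HXZ]].
        split; [tauto|]. exists (X :: nil). split.
        * intros X' [<-|[]]; auto.
        * intros a Ha HaX. split; auto. apply HXZ. apply HaX. left; auto. }
      apply (Gup _ _ (Gand _ _ HG HG2)).
      * intros a [[_ H1] [_ [_ H2]]]. auto.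
      * intros a [].
Qed.
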